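(* Let $(A,\leq,\cdot,/)$ be a right-residuated magma satisfying condition (N). (1) If $(A,\leq)$ has a bottom element $0$, then $0/0$ is the top element of $(A,\leq)$. (2) If $(A,\leq)$ has a top element $\top$, then: (i) $A$ is unital, i.e. $x/x=y/y$ for all $x,y$ (in fact $x/x=\top$ and $\top x = x$ for all $x$); (ii) for all $x,y\in A$, $x\sqcap y\leq x$ and $x\sqcap y\leq y$; (iii) if moreover $A$ is finite, then $(A,\leq)$ has a bottom element.
   Context: Write $xy$ for $x\cdot y$; $\cdot$ binds more strongly than $/$, and $/$ binds more strongly than $\sqcap$, where $x\sqcap y := (x/y)y$. A right-residuated magma is a structure $(A,\leq,\cdot,/)$ where $(A,\leq)$ is a poset and $xy\leq z\iff x\leq z/y$ for all $x,y,z\in A$. Condition (N): for all $x,y\in A$, $x\leq y\iff x = y\sqcap x$. *)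

(* Defs.v *)
From Stdlib Require Import List.

Definition is_poset {A : Type} (le : A -> A -> Prop) : Prop :=
  (forall x, le x x) /\
  (forall x y, le x y -> le y x -> x = y) /\
  (forall x y z, le x y -> le y z -> le x z).

Definition right_residuated_magma {A : Type} (le : A -> A -> Prop)
  (mul rdiv : A -> A -> A) : Prop :=
  is_poset le /\ (forall x y z, le (mul x y) z <-> le x (rdiv z y)).

Definition rmeet {A : Type} (mul rdiv : A -> A -> A) (x y : A) : A :=
  mul (rdiv x y) y.

Definition condN {A : Type} (le : A -> A -> Prop) (mul rdiv : A -> A -> A) : Prop :=
  forall x y, le x y <-> x = rmeet mul rdiv y x.

Definition is_bottom {A : Type} (le : A -> A -> Prop) (b : A) : Prop :=
  forall x, le b x.
Definition is_top {A : Type} (le : A -> A -> Prop) (t : A) : Prop :=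
  forall x, le x t.

Definition finite_type (A : Type) : Prop :=
  exists l : list A, forall x : A, In x l.

(* Main.v *)
Require Import Defs.
From Stdlib Require Import List.

Theorem mainTheorem11 (A : Type) (le : A -> A -> Prop) (mul rdiv : A -> A -> A)
  (HA : right_residuated_magma le mul rdiv) (HN : condN le mul rdiv) :
  (* (1) *)
  (forall z : A, is_bottom le z -> is_top le (rdiv z z)) /\
  (* (2) *)
  (forall t : A, is_top le t ->
     (* (i) unital, with x/x = top and top x = x *)
     ((forall x y, rdiv x x = rdiv y y) /\
      (forall x, rdiv x x = t) /\
      (forall x, mul t x = x)) /\
     (* (ii) *)
     (forall x y, le (rmeet mul rdiv x y) x /\ le (rmeet mul rdiv x y) y) /\
     (* (iii) *)
     (finite_type A -> exists b : A, is_bottom le b)).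
Proof.
  destruct HA as [[Hrefl [Hanti Htrans]] Hres].
  assert (Hmono : forall x x' y, le x x' -> le (mul x y) (mul x' y)).
  { intros x x' y H. apply Hres. apply Htrans with x'; auto.
    apply Hres. apply Hrefl. }
  assert (Hcounit : forall x y, le (mul (rdiv x y) y) x).
  { intros x y. apply Hres. apply Hrefl. }
  split.
  - intros z Hz x. apply Hres.
    assert (E : z = rmeet mul rdiv (mul x z) z) by (apply HN; apply Hz).
    rewrite E at 2. unfold rmeet. apply Hmono. apply Hres. apply Hrefl.
  - intros t Ht.
    assert (Htx : forall x, rdiv t x = t).
    { intro x. apply Hanti. apply Ht. apply Hres. apply Ht. }
    assert (Hmt : forall x, mul t x = x).
    { intro x. assert (E : x = rmeet mul rdiv t x) by (apply HN; apply Ht).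
      unfold rmeet in E. rewrite Htx in E. auto. }
    assert (Hdd : forall x, rdiv x x = t).
    { intro x. apply Hanti. apply Ht. apply Hres. rewrite Hmt. apply Hrefl. }
    assert (Hii : forall x y, le (rmeet mul rdiv x y) x /\ le (rmeet mul rdiv x y) y).
    { intros x y. split. apply Hcounit. unfold rmeet.
      apply Htrans with (mul t y). apply Hmono. apply Ht. rewrite Hmt. apply Hrefl. }
    split; [split; [intros x y; rewrite !Hdd; reflexivity | split; assumption] |].
    split; [exact Hii|].
    intros [l Hl].
    exists (fold_right (fun a acc => rmeet mul rdiv acc a) t l).
    assert (G : forall x, In x l -> le (fold_right (fun a acc => rmeet mul rdiv acc a) t l) x).
    { clear Hl. induction l as [|a l IH]; simpl; intros x Hx. destruct Hx.
      destruct Hx as [<-|Hx]. { apply Hii. }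
      apply Htrans with (fold_right (fun a acc => rmeet mul rdiv acc a) t l).
      apply Hii. apply IH; auto.
    }
    intro x. apply G, Hl.
Qed.
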